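(* Let $n$ be a positive integer and $i,k\in\{1,\ldots,n\}$. Suppose that $H\sim\text{Hyp}(n,i,k)$ satisfies (1) $\mathbb{E}(H) \in (1, \min\{i,k\} -2]$ and (2) $\frac{(n-i)(n-k)}{n}> 1$. Then \[ \mathbb{E}(|H-ik/n|) \ge \frac{e^{-1/8}}{2\sqrt{2}} \cdot \sqrt{\frac{n-1 }{n}} \cdot \sqrt{\text{Var}(H)}. \]
   Context: $\text{Hyp}(n,i,k)$ denotes the hypergeometric distribution: the number of black marbles in a sample without replacement of size $k$ from an urn with $i$ black and $n-i$ white marbles, i.e. $\mathbb{P}(H=j)=\binom{i}{j}\binom{n-i}{k-j}/\binom{n}{k}$. One has $\mathbb{E}(H)=ik/n$ and $\text{Var}(H)=k\cdot\frac{i}{n}\cdot\frac{n-i}{n}\cdot\frac{n-k}{n-1}$. *)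

(* Defs.v *)
From mathcomp Require Import all_boot all_order all_algebra.
From mathcomp Require Import reals.
From mathcomp Require Import sequences exp.
Set Implicit Arguments. Unset Strict Implicit. Unset Printing Implicit Defensive.
Import Order.TTheory GRing.Theory Num.Theory.
Local Open Scope ring_scope.

(* P(H = j) for H ~ Hyp(n,i,k): C(i,j) C(n-i,k-j) / C(n,k).
   Only j in {0,...,k} can have positive probability. *)
Definition hyp_pmf (R : realType) (n i k j : nat) : R :=
  ('C(i, j) * 'C(n - i, k - j))%:R / ('C(n, k))%:R.

Definition hyp_E (R : realType) (n i k : nat) (f : nat -> R) : R :=
  \sum_(j < k.+1) hyp_pmf R n i k j * f j.

Definition hyp_mean (R : realType) (n i k : nat) : R :=
  hyp_E n i k (fun j => j%:R).

Definition hyp_var (R : realType) (n i k : nat) : R :=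
  hyp_E n i k (fun j => (j%:R - hyp_mean R n i k) ^+ 2).

(* Main.v *)
Require Import Defs.
From mathcomp Require Import all_boot all_order all_algebra.
From mathcomp Require Import reals.
From mathcomp Require Import sequences exp.
From mathcomp Require Import zify ring lra.
Import Order.TTheory GRing.Theory Num.Theory.
Local Open Scope ring_scope.
Set Implicit Arguments. Unset Strict Implicit. Unset Printing Implicit Defensive.

Section NatPart.
Local Open Scope nat_scope.

Lemma shiftC (a m k : nat) (g : nat -> nat) :
  \sum_(j < k.+2) 'C(a.+1, j) * 'C(m, k.+1 - j) * (j * g j) =
  a.+1 * \sum_(j < k.+1) 'C(a, j) * 'C(m, k - j) * g j.+1.
Proof.
rewrite big_ord_recl /= mul0n muln0 add0n big_distrr /=.
apply: eq_bigr => j _; rewrite /= subSS.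
have h := mul_bin_diag a.+1 j; simpl in h.
idtac.
rewrite /bump add1n !mulnA h; ring.
Qed.

Lemma fmom r : forall a m k, r <= a -> r <= k ->
  \sum_(j < k.+1) 'C(a, j) * 'C(m, k - j) * j ^_ r = a ^_ r * 'C(a - r + m, k - r).
Proof.
elim: r => [|r IH] a m k ha hk.
  under eq_bigr do rewrite ffactn0 muln1.
  by rewrite binomial.Vandermonde ffactn0 mul1n !subn0.
case: a ha => [//|a] ha; case: k hk => [//|k] hk.
under eq_bigr do rewrite ffactnS.
rewrite (shiftC a m k (fun j => j.-1 ^_ r)) /= IH //.
by rewrite ffactSS !subSS mulnA.
Qed.

Lemma binff r : forall n k, r <= k -> 'C(n, k) * k ^_ r = n ^_ r * 'C(n - r, k - r).
Proof.
elim: r => [|r IH] n k hk.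
  by rewrite !ffactn0 muln1 mul1n !subn0.
case: k hk => [//|k] hk.
case: n => [|n]; first by rewrite bin0n ffact0n.
rewrite ffactSS mulnA (mulnC 'C(_,_)) -mul_bin_diag /= -mulnA IH //.
by rewrite !subSS mulnA.
Qed.

End NatPart.

Lemma natr_ffS (R : realType) j r : ((j ^_ r.+1)%:R : R) = (j ^_ r)%:R * (j%:R - r%:R).
Proof.
rewrite ffactnSr natrM; case: (leqP r j) => h; first by rewrite natrB.
by rewrite ffact_small // mulr0n !mul0r.
Qed.

Lemma ff1 (R : realType) j : ((j ^_ 1)%:R : R) = j%:R.
Proof. by rewrite ffactn1. Qed.
Lemma ff2 (R : realType) j : ((j ^_ 2)%:R : R) = j%:R * (j%:R - 1).
Proof. by rewrite natr_ffS ff1. Qed.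
Lemma ff3 (R : realType) j : ((j ^_ 3)%:R : R) = j%:R * (j%:R - 1) * (j%:R - 2).
Proof. by rewrite natr_ffS ff2. Qed.
Lemma ff4 (R : realType) j : ((j ^_ 4)%:R : R) = j%:R * (j%:R - 1) * (j%:R - 2) * (j%:R - 3).
Proof. by rewrite natr_ffS ff3. Qed.

Section E.
Lemma hypE_ext (R : realType) n i k (f g : nat -> R) : (forall j, f j = g j) ->
  hyp_E n i k f = hyp_E n i k g.
Proof. by move=> h; apply: eq_bigr => j _; rewrite h. Qed.

Lemma hypE_D (R : realType) n i k (f g : nat -> R) :
  hyp_E n i k (fun j => f j + g j) = hyp_E n i k f + hyp_E n i k g.
Proof. by rewrite /hyp_E -big_split; apply: eq_bigr => j _; rewrite mulrDr. Qed.

Lemma hypE_Z (R : realType) n i k (a : R) (f : nat -> R) :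
  hyp_E n i k (fun j => a * f j) = a * hyp_E n i k f.
Proof. by rewrite /hyp_E mulr_sumr; apply: eq_bigr => j _; rewrite mulrCA. Qed.

Lemma pmf_ge0 (R : realType) n i k j : 0 <= hyp_pmf R n i k j.
Proof. by rewrite /hyp_pmf divr_ge0. Qed.

Lemma hypE_le (R : realType) n i k (f g : nat -> R) : (forall j, f j <= g j) ->
  hyp_E n i k f <= hyp_E n i k g.
Proof.
move=> h; apply: ler_sum => j _; apply: ler_wpM2l; [exact: pmf_ge0| exact: h].
Qed.

Lemma hypE_ff (R : realType) n i k r : (i <= n)%N -> (k <= n)%N -> (r <= i)%N -> (r <= k)%N ->
  hyp_E n i k (fun j => (j ^_ r)%:R) = (i ^_ r * k ^_ r)%:R / (n ^_ r)%:R :> R.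
Proof.
move=> hi hk hri hrk.
rewrite /hyp_E /hyp_pmf.
under eq_bigr do rewrite mulrAC -natrM.
rewrite -mulr_suml -natr_sum fmom //.
have -> : (i - r + (n - i) = n - r)%N by lia.
have hC : ('C(n, k)%:R : R) != 0 by rewrite pnatr_eq0 -lt0n bin_gt0.
have hF : ((n ^_ r)%:R : R) != 0 by rewrite pnatr_eq0 -lt0n ffact_gt0; lia.
apply/eqP; rewrite eqr_div // -!natrM eqr_nat; apply/eqP.
by rewrite -!mulnA; congr (_ * _); rewrite mulnC -binff // mulnC.
Qed.
End E.

Definition s2f (R : realFieldType) (x y N : R) := x*y*(N-x)*(N-y)/(N^+2*(N-1)).
Definition Tf (R : realFieldType) (x y N : R) :=
  (N*(N+1) - 6*(x*(N-x)) - 6*(y*(N-y)) + 6*s2f x y N*(5*N-6))/((N-2)*(N-3)).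
Definition e1f (R : realFieldType) (x y N : R) := x*y/N.
Definition e2f (R : realFieldType) (x y N : R) := (x*(x-1))*(y*(y-1))/(N*(N-1)).
Definition e3f (R : realFieldType) (x y N : R) := (x*(x-1)*(x-2))*(y*(y-1)*(y-2))/(N*(N-1)*(N-2)).
Definition e4f (R : realFieldType) (x y N : R) :=
  (x*(x-1)*(x-2)*(x-3))*(y*(y-1)*(y-2)*(y-3))/(N*(N-1)*(N-2)*(N-3)).

Lemma m2_id (R : realFieldType) (x y N : R) : N != 0 -> N - 1 != 0 ->
  let mu := x*y/N in
  e2f x y N + (1 - 2*mu) * e1f x y N + mu^+2 = s2f x y N.
Proof. move=> h0 h1 /=; rewrite /e2f /e1f /s2f; field; rewrite ?h0 ?h1 //. Qed.

Lemma m4_id (R : realFieldType) (x y N : R) : N != 0 -> N - 1 != 0 -> N - 2 != 0 -> N - 3 != 0 ->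
  let mu := x*y/N in
  e4f x y N + (6 - 4*mu) * e3f x y N + (7 - 12*mu + 6*mu^+2) * e2f x y N
  + (1 - 4*mu + 6*mu^+2 - 4*mu^+3) * e1f x y N + mu^+4
  = 3 * (s2f x y N)^+2 + s2f x y N * Tf x y N.
Proof. move=> h0 h1 h2 h3 /=; rewrite /e4f /e3f /e2f /e1f /Tf /s2f; field.
by rewrite h0 h1 h2 h3. Qed.

Lemma key_ineq (R : realFieldType) (x y N : R) : 0 < N ->
  1 < x*y/N -> x*y/N <= x - 2 -> x*y/N <= y - 2 -> 1 < (N-x)*(N-y)/N ->
  [/\ 8 <= N, 0 < s2f x y N & Tf x y N <= 7 * s2f x y N].
Proof.
move=> hN hA hB hC hD.
have hN0 : N != 0 by rewrite gt_eqF.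
have eD : (N-x)*(N-y)/N = N - x - y + x*y/N by field.
rewrite eD in hD.
have ew : (x*y/N) * (N - x - y + x*y/N) = (x - x*y/N) * (y - x*y/N) by field.
have ewN : (x*y/N) * (N - x - y + x*y/N) * N^+2 = x * (N - x) * (y * (N - y)) by field.
move: hA hB hC hD ew ewN; move eA : (x*y/N) => A; move eD' : (N - x - y + A) => D.
move=> hA hB hC hD ew ewN.
have eN := esym eD'.
have pBC : 0 <= (x - A - 2) * (y - A - 2) by apply: mulr_ge0; lra.
have pAD : 0 <= (A - 1) * (D - 1) by apply: mulr_ge0; lra.
have hw4 : 4 <= A * D by rewrite ew; nra.
have hw1 : A + D - 1 <= A * D by nra.
have hw2 : 2 * (x - A) + 2 * (y - A) - 4 <= A * D by rewrite ew; nra.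
have hw3 : 2 * N - 6 <= 3 * (A * D) by lra.
have hu : 3 * N - 9 <= x * (N - x).
  have h1 : 3 <= x by lra.
  have h2 : 3 <= N - x by lra.
  have p : 0 <= (x - 3) * (N - x - 3) by apply: mulr_ge0; lra.
  nra.
have hv : 3 * N - 9 <= y * (N - y).
  have h1 : 3 <= y by lra.
  have h2 : 3 <= N - y by lra.
  have p : 0 <= (y - 3) * (N - y - 3) by apply: mulr_ge0; lra.
  nra.
have hu4 : 4 * (x * (N - x)) <= N^+2 by have := sqr_ge0 (N - 2*x); nra.
have hv4 : 4 * (y * (N - y)) <= N^+2 by have := sqr_ge0 (N - 2*y); nra.
have hN6 : 6 <= N by lra.
have hu0 : 0 <= x * (N - x) by lra.
have hv0 : 0 <= y * (N - y) by lra.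
have h8 : 8 <= N.
  have : 16 * (A * D * N^+2) <= N^+2 * N^+2.
    rewrite ewN.
    have e : 4 * (x*(N-x)) * (4 * (y*(N-y))) = 16 * (x * (N - x) * (y * (N - y))) by ring.
    rewrite -e; apply: ler_pM => //; lra.
  move=> h; have h64 : 64 <= N^+2.
    have hN2 : 0 < N^+2 by rewrite exprn_gt0.
    nra.
  nra.
have hN1 : N - 1 != 0 by rewrite gt_eqF //; lra.
have hN2 : N - 2 != 0 by rewrite gt_eqF //; lra.
have hN3 : N - 3 != 0 by rewrite gt_eqF //; lra.
have es2 : s2f x y N = A * D / (N - 1).
  have e : x*y*(N-x)*(N-y) = x*(N-x)*(y*(N-y)) by ring.
  rewrite /s2f e -ewN; field; by rewrite hN0 hN1.
have hN1p : 0 < N - 1 by lra.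
split => //.
  by rewrite es2 divr_gt0 //; lra.
rewrite /Tf es2.
have hp : 0 < (N - 2) * (N - 3) by apply: mulr_gt0; lra.
rewrite ler_pdivrMr //.
set w := A * D in hw4 hw3 es2 *.
set u := x * (N - x) in hu *.
set v := y * (N - y) in hv *.
clearbody w u v.
have hc : 0 <= 7 * N^+2 - 65 * N + 78.
  have p : 0 <= (N - 8) * (7 * N - 9) by apply: mulr_ge0; lra.
  have e : 7 * N^+2 - 65 * N + 78 = (N - 8) * (7 * N - 9) + 6 by ring.
  rewrite e; lra.
have hwc : (2 * N - 6) * (7 * N^+2 - 65 * N + 78) <= 3 * w * (7 * N^+2 - 65 * N + 78).
  by apply: ler_wpM2r => //; lra.
have hpoly : 0 <= 11 * N^+3 - 64 * N^+2 + 117 * N - 144.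
  have e : 11 * N^+3 - 64 * N^+2 + 117 * N - 144 = 11 * (N - 8)^+3 + 200 * (N - 8)^+2 + 1205 * (N - 8) + 2328 by ring.
  have p1 : 0 <= N - 8 by lra.
  have p2 : 0 <= (N - 8)^+2 by apply: exprn_ge0.
  have p3 : 0 <= (N - 8)^+3 by apply: exprn_ge0.
  rewrite e; lra.
have goal' : (N - 1) * (N * (N + 1)) - 6 * (N - 1) * (u + v) + 6 * w * (5 * N - 6)
   <= 7 * w * ((N - 2) * (N - 3)).
  have huv : 6 * (N - 1) * (6 * N - 18) <= 6 * (N - 1) * (u + v).
    apply: ler_wpM2l; lra.
  lra.
have -> : N * (N + 1) - 6 * u - 6 * v + 6 * (w / (N - 1)) * (5 * N - 6)
   = ((N - 1) * (N * (N + 1)) - 6 * (N - 1) * (u + v) + 6 * w * (5 * N - 6)) / (N - 1).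
  by field.
have -> : 7 * (w / (N - 1)) * ((N - 2) * (N - 3)) = (7 * w * ((N - 2) * (N - 3))) / (N - 1)
  by field.
by rewrite ler_pM2r // invr_gt0.
Qed.

Lemma cubic (R : realFieldType) (s z : R) : 0 < s -> 0 <= z ->
  0 <= 10000 * s^+3 - 4700 * z * s^+2 + 155 * z^+3.
Proof.
move=> hs hz.
have p : 0 <= (50 * z - 159 * s)^+2 * (50 * z + 318 * s).
  apply: mulr_ge0; [exact: sqr_ge0| lra].
have h1 : 0 <= z * s^+2 by apply: mulr_ge0 => //; exact: sqr_ge0.
have h2 : 0 <= s^+3 by apply: exprn_ge0; lra.
nra.
Qed.

Lemma pointwise (R : realFieldType) (s t : R) : 0 < s ->
  4700 * s^+2 * t^+2 - 155 * t^+4 <= 10000 * s^+3 * `|t|.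
Proof.
move=> hs.
have ht2 : t^+2 = `|t|^+2 by rewrite real_normK // num_real.
have ht4 : t^+4 = (`|t|^+2)^+2 by rewrite -ht2 -exprM.
rewrite ht4 ht2.
have hz : 0 <= `|t| by [].
have := cubic hs hz.
move: `|t| hz => z hz h.
have : 0 <= z * (10000 * s^+3 - 4700 * z * s^+2 + 155 * z^+3) by apply: mulr_ge0.
nra.
Qed.

Unset Implicit Arguments.
Set Strict Implicit.
Set Printing Implicit Defensive.

Theorem theorem4 (R : realType) (n i k : nat) :
  (0 < n)%N -> (1 <= i <= n)%N -> (1 <= k <= n)%N ->
  1 < hyp_mean R n i k ->
  hyp_mean R n i k <= (minn i k)%:R - 2 ->
  1 < ((n - i) * (n - k))%:R / n%:R :> R ->
  expR (- (1 / 8)) / (2 * Num.sqrt 2) * Num.sqrt ((n%:R - 1) / n%:R)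
    * Num.sqrt (hyp_var R n i k)
  <= hyp_E n i k (fun j => `| j%:R - (i * k)%:R / n%:R |).
Proof.
move=> hn /andP[hi1 hin] /andP[hk1 hkn] hm1 hm2 hnu.
have hmean : hyp_mean R n i k = i%:R * k%:R / n%:R.
  rewrite /hyp_mean (@hypE_ext R n i k _ (fun j => (j ^_ 1)%:R)); last by move=> j; rewrite ffactn1.
  by rewrite hypE_ff // !ffactn1 natrM.
rewrite hmean in hm1 hm2.
have hmin : (3 < minn i k)%N.
  have : (3%:R : R) < (minn i k)%:R by lra.
  by rewrite ltr_nat.
have hi4 : (4 <= i)%N by lia.
have hk4 : (4 <= k)%N by lia.
have hmx : (minn i k)%:R <= i%:R :> R by rewrite ler_nat geq_minl.
have hmy : (minn i k)%:R <= k%:R :> R by rewrite ler_nat geq_minr.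
rewrite natrM !natrB // in hnu.
rewrite natrM.
set x : R := i%:R in hm1 hm2 hmx hmy hnu hmean *.
set y : R := k%:R in hm1 hm2 hmx hmy hnu hmean *.
set N : R := n%:R in hm1 hm2 hmx hmy hnu hmean *.
have hN : 0 < N by rewrite ltr0n.
have hB : x * y / N <= x - 2 by lra.
have hC : x * y / N <= y - 2 by lra.
have [h8 hs2 hT] := key_ineq hN hm1 hB hC hnu.
have hN0 : N != 0 by rewrite gt_eqF.
have hN1 : N - 1 != 0 by rewrite gt_eqF //; lra.
have hN2 : N - 2 != 0 by rewrite gt_eqF //; lra.
have hN3 : N - 3 != 0 by rewrite gt_eqF //; lra.
set mu := x * y / N.
have ffx r : (r <= 4)%N -> hyp_E n i k (fun j => (j ^_ r)%:R) = (i ^_ r * k ^_ r)%:R / (n ^_ r)%:R :> R.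
  by move=> hr; apply: hypE_ff => //; [apply: leq_trans hr hi4 | apply: leq_trans hr hk4].
have E0 : hyp_E n i k (fun j => (j ^_ 0)%:R) = 1 :> R.
  by rewrite (ffx 0%N) // !ffactn0 divr1.
have E1 : hyp_E n i k (fun j => (j ^_ 1)%:R) = x * y / N.
  by rewrite (ffx 1%N) // natrM !ff1.
have E2 : hyp_E n i k (fun j => (j ^_ 2)%:R) = x * (x - 1) * (y * (y - 1)) / (N * (N - 1)).
  by rewrite (ffx 2%N) // natrM !ff2.
have E3 : hyp_E n i k (fun j => (j ^_ 3)%:R) = x * (x - 1) * (x - 2) * (y * (y - 1) * (y - 2)) / (N * (N - 1) * (N - 2)).
  by rewrite (ffx 3%N) // natrM !ff3.
have E4 : hyp_E n i k (fun j => (j ^_ 4)%:R) = x * (x - 1) * (x - 2) * (x - 3) * (y * (y - 1) * (y - 2) * (y - 3)) / (N * (N - 1) * (N - 2) * (N - 3)).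
  by rewrite (ffx 4%N) // natrM !ff4.
have m2 : hyp_E n i k (fun j => (j%:R - mu)^+2) = s2f x y N.
  rewrite (@hypE_ext R n i k _ (fun j => (j ^_ 2)%:R + ((1 - 2 * mu) * (j ^_ 1)%:R + mu^+2 * (j ^_ 0)%:R))); last first.
    by move=> j; rewrite ff2 ff1 ffactn0; ring.
  rewrite !hypE_D !hypE_Z E2 E1 E0.
  rewrite /s2f /mu; field.
  by rewrite hN0 hN1.
have m4 : hyp_E n i k (fun j => (j%:R - mu)^+4) = 3 * (s2f x y N)^+2 + s2f x y N * Tf x y N.
  rewrite (@hypE_ext R n i k _ (fun j => (j ^_ 4)%:R + ((6 - 4 * mu) * (j ^_ 3)%:R
     + ((7 - 12 * mu + 6 * mu^+2) * (j ^_ 2)%:R + ((1 - 4 * mu + 6 * mu^+2 - 4 * mu^+3) * (j ^_ 1)%:R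
     + mu^+4 * (j ^_ 0)%:R))))); last first.
    by move=> j; rewrite ff4 ff3 ff2 ff1 ffactn0; ring.
  rewrite !hypE_D !hypE_Z E4 E3 E2 E1 E0.
  rewrite -m4_id // /e4f /e3f /e2f /e1f -/mu; ring.
have hvar : hyp_var R n i k = s2f x y N by rewrite /hyp_var hmean.
rewrite hvar.
set s2 := s2f x y N in hs2 hT m2 m4 *.
set s := Num.sqrt s2.
have hs : 0 < s by rewrite sqrtr_gt0.
have hss : s^+2 = s2 by rewrite sqr_sqrtr // ltW.
have hm4 : 3 * s2^+2 + s2 * Tf x y N <= 10 * s^+4.
  have : s2 * Tf x y N <= s2 * (7 * s2) by apply: ler_wpM2l => //; exact: ltW.
  have -> : s^+4 = s2^+2 by rewrite -hss -exprM.
  lra.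
set c := (10000 * s^+3)^-1.
have hc : 0 < c by rewrite invr_gt0 mulr_gt0 // exprn_gt0.
have hE : hyp_E n i k (fun j => (4700 * s^+2 * c) * (j%:R - mu)^+2 + (- 155 * c) * (j%:R - mu)^+4)
   <= hyp_E n i k (fun j => `| j%:R - mu |).
  apply: hypE_le => j.
  have := pointwise (j%:R - mu) hs.
  rewrite /c => h.
  have e : 4700 * s ^+ 2 * (10000 * s ^+ 3)^-1 * (j%:R - mu) ^+ 2 +
     - 155 * (10000 * s ^+ 3)^-1 * (j%:R - mu) ^+ 4
     = (4700 * s^+2 * (j%:R - mu)^+2 - 155 * (j%:R - mu)^+4) / (10000 * s^+3).
    by field; rewrite gt_eqF // exprn_gt0.
  rewrite e ler_pdivrMr; last by rewrite mulr_gt0 // exprn_gt0.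
  by rewrite [X in _ <= X]mulrC.
rewrite hypE_D !hypE_Z m2 m4 in hE.
have hlow : 63 / 200 * s <= hyp_E n i k (fun j => `| j%:R - mu |).
  apply: le_trans hE.
  have hs0 : s != 0 by rewrite gt_eqF.
  have e1 : 4700 * s ^+ 2 * c * s2 = 47 / 100 * s.
    by rewrite /c -hss; field; rewrite ?hs0.
  have e2 : (- 155 * c) * (10 * s^+4) = - (155 / 1000) * s.
    by rewrite /c; field; rewrite ?hs0.
  have : (- 155 * c) * (10 * s^+4) <= (- 155 * c) * (3 * s2 ^+ 2 + s2 * Tf x y N).
    by apply: ler_wnM2l => //; rewrite mulNr oppr_le0 mulr_ge0 // ltW.
  lra.
apply: le_trans hlow.
set q := Num.sqrt ((N - 1) / N).
have hq0 : 0 <= q by exact: sqrtr_ge0.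
have hq1 : q <= 1.
  have hqq : q^+2 = (N - 1) / N by rewrite sqr_sqrtr // divr_ge0 //; lra.
  have : (N - 1) / N <= 1 by rewrite ler_pdivrMr //; lra.
  nra.
set r := Num.sqrt 2.
have hr0 : 0 <= r by exact: sqrtr_ge0.
have hrr : r^+2 = 2 by rewrite sqr_sqrtr.
have hr : 1414 / 1000 <= r by nra.
set e := expR (- (1 / 8)).
have he0 : 0 < e by exact: expR_gt0.
have he : e <= 8 / 9.
  have h1 := expR_ge1Dx (1 / 8 : R).
  have h2 : expR (1 / 8) * e = 1 by rewrite /e expRxMexpNx_1.
  nra.
have hc0 : e / (2 * r) <= 63 / 200.
  rewrite ler_pdivrMr; last by lra.
  lra.
have hc00 : 0 <= e / (2 * r) by apply: divr_ge0; lra.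
apply: ler_wpM2r; first exact: ltW.
have := ler_pM hc00 hq0 hc0 hq1.
by rewrite mulr1.
Qed.
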